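(* Let $\phi:K\to\mathbb R$ be a convex function that attains its minimum value at $0$. Then for all $x,y\in K$ with $|x|\le|y|$ we have $\phi(x)\le\phi(y)$.
   Context: $K$ is a field complete with respect to a non-trivial non-archimedean absolute value, $B_K=\{x\in K:|x|\le1\}$. A function $\phi:E\to\mathbb R$ on a $K$-vector space $E$ is convex if for all $n$, $x_1,\dots,x_n\in E$ and $\lambda_1,\dots,\lambda_n\in B_K$ with $\sum\lambda_i=1$ one has $\phi(\sum\lambda_ix_i)\le\max_i|\lambda_i|\phi(x_i)$. *)

(* Defs.v *)
From HB Require Import structures.
From mathcomp Require Import all_boot all_order all_algebra.
From mathcomp Require Import reals.
Set Implicit Arguments. Unset Strict Implicit. Unset Printing Implicit Defensive.
Import Order.TTheory GRing.Theory Num.Theory.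
Local Open Scope ring_scope.

Definition nonarch_abs (K : fieldType) (R : realType) (abs : K -> R) : Prop :=
  [/\ forall x, 0 <= abs x,
      forall x, abs x = 0 <-> x = 0,
      forall x y, abs (x * y) = abs x * abs y
    & forall x y, abs (x + y) <= Num.max (abs x) (abs y)].

Definition nontrivial_abs (K : fieldType) (R : realType) (abs : K -> R) : Prop :=
  exists x : K, x != 0 /\ abs x != 1.

Definition abs_cauchy (K : fieldType) (R : realType) (abs : K -> R)
  (u : nat -> K) : Prop :=
  forall e : R, 0 < e -> exists N : nat, forall m n : nat,
    (N <= m)%N -> (N <= n)%N -> abs (u m - u n) < e.

Definition abs_complete (K : fieldType) (R : realType) (abs : K -> R) : Prop :=
  forall u : nat -> K, abs_cauchy abs u ->
    exists l : K, forall e : R, 0 < e -> exists N : nat, forall n : nat,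
      (N <= n)%N -> abs (u n - l) < e.

(* Convexity of phi : E -> R on the K-vector space E := K (scalar action =
   multiplication). For n = 0 the condition sum lambda_i = 1 is impossible,
   so it suffices to quantify over families indexed by 'I_n.+1; the max over
   the (nonempty) index set is written as a big max seeded by the term i = 0. *)
Definition convex_fun (K : fieldType) (R : realType) (abs : K -> R)
  (phi : K -> R) : Prop :=
  forall (n : nat) (x lam : 'I_n.+1 -> K),
    (forall i, abs (lam i) <= 1) ->
    \sum_(i < n.+1) lam i = 1 ->
    phi (\sum_(i < n.+1) lam i * x i) <=
      \big[Num.max/(abs (lam ord0) * phi (x ord0))]_(i < n.+1)
         (abs (lam i) * phi (x i)).

(* Main.v *)
Require Import Defs.
From HB Require Import structures.
From mathcomp Require Import all_boot all_order all_algebra.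
From mathcomp Require Import reals.
Import Order.TTheory GRing.Theory Num.Theory.
Local Open Scope ring_scope.

Section Aux.
Variables (R : realType) (K : fieldType) (abs : K -> R).
Hypothesis Habs : nonarch_abs abs.

Lemma abs1 : abs 1 = 1.
Proof.
case: Habs => H0 Hz Hm _.
have h : abs 1 * abs 1 = abs 1 * 1 by rewrite -Hm mulr1 mulr1.
have nz : abs 1 != 0 by apply/eqP => /Hz /eqP; rewrite oner_eq0.
by apply: (mulfI nz).
Qed.

Lemma absN1 : abs (-1) = 1.
Proof.
case: Habs => H0 Hz Hm _.
have h : abs (-1) ^+ 2 = 1 by rewrite expr2 -Hm mulrNN mulr1 abs1.
have := H0 (-1).
move/eqP: h; rewrite sqrf_eq1 => /orP[/eqP //|/eqP ->].
by rewrite ler0N1.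
Qed.

Lemma absN x : abs (- x) = abs x.
Proof. by case: Habs => _ _ Hm _; rewrite -mulN1r Hm absN1 mul1r. Qed.

Lemma abs_1B c : abs c < 1 -> abs (1 - c) = 1.
Proof.
case: Habs => H0 Hz Hm Hu => hc.
apply/eqP; rewrite eq_le; apply/andP; split.
  apply: le_trans (Hu _ _) _; rewrite absN abs1 ge_max lexx /=; exact: ltW.
have := Hu (1 - c) c; rewrite subrK abs1.
rewrite le_max => /orP[//|]; by rewrite leNgt hc.
Qed.
Variable phi : K -> R.
Hypothesis Hconv : convex_fun abs phi.

Lemma conv3 (a b d u v w : K) (M : R) :
  abs a <= 1 -> abs b <= 1 -> abs d <= 1 -> a + b + d = 1 ->
  abs a * phi u <= M -> abs b * phi v <= M -> abs d * phi w <= M ->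
  phi (a * u + b * v + d * w) <= M.
Proof.
move=> Ha Hb Hd Hs Hu Hv Hw.
pose lam := fun i : 'I_3 => [:: a; b; d]`_i.
pose x := fun i : 'I_3 => [:: u; v; w]`_i.
have := Hconv 2%N x lam.
rewrite !big_ord_recr !big_ord0 /= !add0r.
move=> H; apply: le_trans (H _ _) _.
- by case=> [[|[|[|]]]] //.
- by [].
apply: (big_ind (fun t => t <= M)) => [|p q Hp Hq|i _] /=; first by []. by rewrite ge_max Hp Hq. by case: i => [[|[|[|]]]] /=.
Qed.
Hypothesis Hmin : forall z : K, phi 0 <= phi z.
Lemma main_aux x y : abs x <= abs y -> phi x <= phi y.
Proof.
have [H0 Hz Hm Hu] := Habs.
move=> hxy.
have [yz|ynz] := eqVneq y 0.
  rewrite yz in hxy *.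
  have a0 : abs 0 = 0 by apply Hz.
  have : abs x = 0.
    apply/eqP; rewrite eq_le H0 andbT -a0; exact: hxy.
  by move/Hz => ->.
have ay : 0 < abs y by rewrite lt_def H0 andbT; apply/eqP => /Hz /eqP; rewrite (negPf ynz).
set c := x / y.
have xe : x = c * y by rewrite /c divfK.
have ac : abs c <= 1.
  have e : abs c = abs x / abs y.
    by rewrite xe Hm mulfK // gt_eqF.
  by rewrite e ler_pdivrMr // mul1r.
have [ac1|ac1] := eqVneq (abs c) 1.
  have -> : x = c * y + 1 * 0 + (- c) * 0 by rewrite !mulr0 !addr0.
  apply: conv3 => //; rewrite ?absN ?abs1 ?ac1 ?lexx ?mul1r ?Hmin //.
  by rewrite addrC addrA addNr add0r.
have acl : abs c < 1 by rewrite lt_neqAle ac1 ac.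
have -> : x = 1 * y + (c - 1) * y + (1 - c) * 0.
  by rewrite mulr0 addr0 mul1r mulrBl mul1r addrC subrK.
have e1 : abs (c - 1) = 1 by rewrite -opprB absN abs_1B.
apply: conv3 => //; rewrite ?e1 ?abs_1B ?abs1 ?lexx ?mul1r ?Hmin //.
by rewrite (addrC 1 (c - 1)) subrK addrC subrK.
Qed.
End Aux.

Theorem mainTheorem5 (R : realType) (K : fieldType) (abs : K -> R)
  (Habs : nonarch_abs abs) (Hnontriv : nontrivial_abs abs)
  (Hcomplete : abs_complete abs)
  (phi : K -> R) (Hconv : convex_fun abs phi)
  (Hmin : forall z : K, phi 0 <= phi z) :
  forall x y : K, abs x <= abs y -> phi x <= phi y.
Proof. move=> x y; exact: (@main_aux R K abs Habs phi Hconv Hmin x y). Qed.
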